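(* Let $s,q\in\mathbb N$ and $\epsilon\in(0,1)$. Let $\xi$ be a detailing of a distribution $\mu$ over $\{0,1\}^n$ with respect to a finite set $A$, with weight distribution $\eta=\xi|_2$ and type distribution $\Lambda$. If $\xi$ is $\left(\frac{\epsilon}{3(s+1)},q\right)$-good and $n\ge\frac{6q^2(s+1)}{\epsilon}$, then $d_{TV}(\mathcal{D}_{sim}(\eta,\Lambda),\mathcal{D}^{s,q}_{test}(\mu))\le\epsilon$.
   Context: A detailing of $\mu$ with respect to a finite set $A$ is a distribution $\xi$ over $\{0,1\}^n\times A$ whose marginal on $\{0,1\}^n$ is $\mu$; its weight distribution is the marginal $\xi|_2$ on $A$, and for $a$ with $\xi|_2(a)>0$, $\xi|_1^{2:a}$ denotes the distribution of the first coordinate conditioned on the second being $a$. The type of index $i\in[n]$ is $t_i\in[0,1]^A$ with $t_i(a)=\Pr_{x\sim\xi|_1^{2:a}}[x_i=1]$ if $\xi|_2(a)>0$ and $t_i(a)=0$ otherwise; the type distribution $\Lambda$ is the distribution of $t_{\mathbf i}$ for $\mathbf i$ uniform in $[n]$. For a distribution $\nu$ over $\{0,1\}^n$, a $q$-tuple $(j_1,\dots,j_q)$ of distinct indices is $\epsilon$-independent with respect to $\nu$ if $d_{TV}(\nu|_{\{j_1,\dots,j_q\}},\prod_{\ell=1}^q\nu|_{j_\ell})\le\epsilon$ (projection vs. product of one-coordinate marginals); $\nu$ is $(\epsilon,q)$-good if at least a $1-\epsilon$ fraction of the $q$-tuples of distinct indices are $\epsilon$-independent w.r.t. $\nu$;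 the detailing $\xi$ is $(\epsilon,q)$-good if there is $J\subseteq A$ with $\xi|_2(J)\ge1-\epsilon$ such that $\xi|_1^{2:a}$ is $(\epsilon,q)$-good for every $a\in J$. $\mathcal{D}_{sim}(\eta,\Lambda)$ is the distribution on $\{0,1\}^{s\times q}$ of the matrix $M$ obtained by drawing $t_1,\dots,t_q\sim\Lambda$ and $a_1,\dots,a_s\sim\eta$ independently, and then each $M_{i,j}\sim\mathrm{Ber}(t_j(a_i))$ independently. $\mathcal{D}^{s,q}_{test}(\mu)$ is the distribution of the matrix $M_{i,k}=x^i_{j_k}$ where $x^1,\dots,x^s\sim\mu$ independently and $j_1,\dots,j_q$ are independent uniform elements of $[n]$. *)

(* Defs.v *)
From HB Require Import structures.
From mathcomp Require Import all_boot all_order all_algebra.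
Set Implicit Arguments. Unset Strict Implicit. Unset Printing Implicit Defensive.
Import Order.TTheory GRing.Theory Num.Theory.
Local Open Scope ring_scope.

Section Defs.
Variable R : realFieldType.

Definition bvec (n : nat) := {ffun 'I_n -> bool}.

Definition is_dist (T : finType) (p : {ffun T -> R}) : Prop :=
  (forall x, 0 <= p x) /\ \sum_x p x = 1.

Definition dTV (T : finType) (p p' : {ffun T -> R}) : R :=
  2^-1 * \sum_x `|p x - p' x|.

Definition ber (p : R) (b : bool) : R := if b then p else 1 - p.

Definition marg1 (T A : finType) (xi : {ffun T * A -> R}) : {ffun T -> R} :=
  [ffun x => \sum_a xi (x, a)].
Definition marg2 (T A : finType) (xi : {ffun T * A -> R}) : {ffun A -> R} :=
  [ffun a => \sum_x xi (x, a)].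

Definition is_detailing (n : nat) (A : finType) (mu : {ffun bvec n -> R})
  (xi : {ffun bvec n * A -> R}) : Prop :=
  is_dist xi /\ marg1 xi = mu.

Definition cond1 (T A : finType) (xi : {ffun T * A -> R}) (a : A) : {ffun T -> R} :=
  [ffun x => xi (x, a) / marg2 xi a].

Definition type_of (n : nat) (A : finType) (xi : {ffun bvec n * A -> R})
  (i : 'I_n) : {ffun A -> R} :=
  [ffun a => if 0 < marg2 xi a then \sum_(x : bvec n | x i) cond1 xi a x else 0].

(* type distribution Lambda: the distribution of t_i for i uniform in [n],
   represented as a finitely supported distribution: a list of
   (type, probability) pairs with distinct types. *)
Definition type_dist (n : nat) (A : finType) (xi : {ffun bvec n * A -> R})
  : seq ({ffun A -> R} * R) :=
  [seq (t, #|[set i : 'I_n | type_of xi i == t]|%:R / n%:R)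
  | t <- undup [seq type_of xi i | i <- enum 'I_n]].

Definition marg_coord (n : nat) (nu : {ffun bvec n -> R}) (i : 'I_n) : {ffun bool -> R} :=
  [ffun b => \sum_(x : bvec n | x i == b) nu x].

Definition proj (n q : nat) (nu : {ffun bvec n -> R}) (j : {ffun 'I_q -> 'I_n})
  : {ffun bvec q -> R} :=
  [ffun y : bvec q => \sum_(x : bvec n | [forall k, x (j k) == y k]) nu x].

Definition prod_marg (n q : nat) (nu : {ffun bvec n -> R}) (j : {ffun 'I_q -> 'I_n})
  : {ffun bvec q -> R} :=
  [ffun y : bvec q => \prod_(k < q) marg_coord nu (j k) (y k)].

Definition eps_indep (n q : nat) (eps : R) (nu : {ffun bvec n -> R})
  (j : {ffun 'I_q -> 'I_n}) : bool :=
  dTV (proj nu j) (prod_marg nu j) <= eps.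

Definition good_dist (n : nat) (eps : R) (q : nat) (nu : {ffun bvec n -> R}) : Prop :=
  (1 - eps) * #|[set j : {ffun 'I_q -> 'I_n} | injectiveb j]|%:R
    <= #|[set j : {ffun 'I_q -> 'I_n} | injectiveb j && eps_indep eps nu j]|%:R.

Definition good_detailing (n : nat) (A : finType) (eps : R) (q : nat)
  (xi : {ffun bvec n * A -> R}) : Prop :=
  exists J : {set A},
    1 - eps <= \sum_(a in J) marg2 xi a /\
    forall a, a \in J -> 0 < marg2 xi a /\ good_dist eps q (cond1 xi a).

(* D_sim(eta, Lambda) on {0,1}^{s x q}: draw t_1..t_q ~ Lambda (indexing the
   support list of Lambda), a_1..a_s ~ eta, then M_{ij} ~ Ber(t_j(a_i)). *)
Definition D_sim (s q : nat) (A : finType) (eta : {ffun A -> R})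
  (Lam : seq ({ffun A -> R} * R)) : {ffun 'M[bool]_(s, q) -> R} :=
  [ffun M : 'M[bool]_(s, q) => \sum_(a : {ffun 'I_s -> A})
               \sum_(k : {ffun 'I_q -> 'I_(size Lam)})
                 (\prod_(i < s) eta (a i)) *
                 (\prod_(j < q) (nth (0, 0) Lam (k j)).2) *
                 \prod_(i < s) \prod_(j < q)
                     ber ((nth (0, 0) Lam (k j)).1 (a i)) (M i j)].

(* D_test^{s,q}(mu): x^1..x^s ~ mu independently, j_1..j_q uniform in [n]
   independently, M_{ik} = x^i_{j_k}. *)
Definition D_test (s q n : nat) (mu : {ffun bvec n -> R}) : {ffun 'M[bool]_(s, q) -> R} :=
  [ffun M : 'M[bool]_(s, q) => \sum_(x : {ffun 'I_s -> bvec n})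
               \sum_(j : {ffun 'I_q -> 'I_n})
                 (\prod_(i < s) mu (x i)) * (n%:R ^+ q)^-1 *
                 (if [forall i, forall k, x i (j k) == M i k] then 1 else 0)].

End Defs.

(* Main.v *)
Require Import Defs.
From HB Require Import structures.
From mathcomp Require Import all_boot all_order all_algebra.
From mathcomp Require Import ring lra.
Import Order.TTheory GRing.Theory Num.Theory.
Local Open Scope ring_scope.

Module W.
Set Implicit Arguments. Unset Strict Implicit. Unset Printing Implicit Defensive.

Section Gen.
Variable R : realFieldType.

Lemma sum_prod_ffun (s : nat) (T : finType) (P : 'I_s -> T -> R) :
  \sum_(y : {ffun 'I_s -> T}) \prod_i P i (y i) = \prod_i \sum_t P i t.
Proof. by rewrite bigA_distr_bigA. Qed.

Lemma hybrid (s : nat) (T : finType) (P Q : 'I_s -> T -> R) :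
  (forall i t, 0 <= P i t) -> (forall i t, 0 <= Q i t) ->
  (forall i, \sum_t P i t = 1) -> (forall i, \sum_t Q i t = 1) ->
  \sum_(y : {ffun 'I_s -> T}) `|\prod_i Q i (y i) - \prod_i P i (y i)|
    <= \sum_i \sum_t `|Q i t - P i t|.
Proof.
move=> P0 Q0 P1 Q1.
pose H (m : nat) (y : {ffun 'I_s -> T}) :=
  \prod_(i < s) (if (i < m)%N then Q i (y i) else P i (y i)).
pose G (m : nat) (i : 'I_s) t := if (i < m)%N then Q i t
   else if (i == m :> nat) then Q i t - P i t else P i t.
have HQ (y : {ffun 'I_s -> T}) : \prod_i Q i (y i) = H s y.
  by apply: eq_bigr => i _; rewrite ltn_ord.
have HP (y : {ffun 'I_s -> T}) : \prod_i P i (y i) = H 0%N y.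
  by apply: eq_bigr => i _.
have step m (hm : (m < s)%N) (y : {ffun 'I_s -> T}) : H m.+1 y - H m y = \prod_i G m i (y i).
  rewrite /H /G (bigD1 (Ordinal hm)) //= [X in _ - X](bigD1 (Ordinal hm)) //=.
  rewrite [X in _ = X](bigD1 (Ordinal hm)) //= ltnSn ltnn eqxx.
  have A1 : \prod_(i < s | i != Ordinal hm)
      (if (i < m.+1)%N then Q i (y i) else P i (y i)) =
    \prod_(i < s | i != Ordinal hm) (if (i < m)%N then Q i (y i) else P i (y i)).
    apply: eq_bigr => i hi.
    have him : (i : nat) != m.
      by apply/eqP => E; move/eqP: hi; apply; apply: val_inj.
    by rewrite ltnS leq_eqVlt (negbTE him).
  have AG : \prod_(i < s | i != Ordinal hm) (if (i < m)%N then Q i (y i)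
       else if (i == m :> nat) then Q i (y i) - P i (y i) else P i (y i)) =
    \prod_(i < s | i != Ordinal hm) (if (i < m)%N then Q i (y i) else P i (y i)).
    apply: eq_bigr => i hi.
    have him : (i : nat) != m.
      by apply/eqP => E; move/eqP: hi; apply; apply: val_inj.
    by rewrite (negbTE him).
  rewrite A1 AG.
  by rewrite -mulrBl.
have tel (y : {ffun 'I_s -> T}) : \prod_i Q i (y i) - \prod_i P i (y i) =
    \sum_(m < s) \prod_i G m i (y i).
  rewrite HQ HP -(telescope_sumr (fun m => H m y) (leq0n s)) big_mkord.
  by apply: eq_bigr => m _; rewrite step.
under eq_bigr => y _ do rewrite tel.
apply: (le_trans (ler_sum _ (fun y _ => ler_norm_sum _ _ _))).
rewrite exchange_big /=; apply: ler_sum => m _.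
under eq_bigr => y _ do rewrite normr_prod.
rewrite (sum_prod_ffun (fun i t => `|G m i t|)) (bigD1 m) //=. rewrite /G ltnn eqxx /=.
rewrite [X in _ * X <= _]big1 ?mulr1 // => i him.
have him' : (i : nat) != m.
  by apply/eqP => E; move/eqP: him; apply; apply: val_inj.
case hc : (i < m)%N.
  by under eq_bigr => t _ do rewrite ger0_norm //; rewrite Q1.
by under eq_bigr => t _ do rewrite (negbTE him') ger0_norm //; rewrite P1.
Qed.

End Gen.

End W.
Import W.

Module W2.
Set Implicit Arguments. Unset Strict Implicit. Unset Printing Implicit Defensive.

Section Gen2.
Variable R : realFieldType.

Lemma prod_nat_bool (I : finType) (b : I -> bool) :
  \prod_i ((b i)%:R : R) = ([forall i, b i])%:R.
Proof.
case: forallP => H.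
  by rewrite big1 // => i _; rewrite H.
have [i /negbTE hi] : exists i, ~~ b i.
  by apply/existsP; rewrite -negb_forall; apply/negP => /forallP.
by rewrite (bigD1 i) //= hi mul0r.
Qed.

Lemma sum_nat_bool (I : finType) (b : I -> bool) :
  \sum_i ((b i)%:R : R) = #|[set i | b i]|%:R.
Proof.
rewrite -[RHS]mulr1n -sumr_const [RHS]big_mkcond /=.
by apply: eq_bigr => i _; rewrite inE; case: (b i).
Qed.
End Gen2.

Section Lam.
Variables (R : realFieldType) (n q : nat) (A : finType)
  (xi : {ffun bvec n * A -> R}).

Let L := undup [seq type_of xi i | i <- enum 'I_n].
Let Lam := type_dist xi.

Lemma size_Lam : size Lam = size L.
Proof. by rewrite /Lam /type_dist size_map. Qed.

Lemma phi_proof (i : 'I_n) : (index (type_of xi i) L < size Lam)%N.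
Proof. by rewrite size_Lam index_mem mem_undup map_f // mem_enum. Qed.

Definition phi (i : 'I_n) : 'I_(size Lam) := Ordinal (phi_proof i).

Lemma nth_Lam (k : 'I_(size Lam)) :
  nth (0, 0) Lam k = (nth [ffun=> 0] L k,
     #|[set i : 'I_n | type_of xi i == nth [ffun=> 0] L k]|%:R / n%:R).
Proof.
rewrite /Lam /type_dist (nth_map [ffun=> 0]) //.
by rewrite -size_Lam.
Qed.

Lemma nth_phi (i : 'I_n) : nth [ffun=> 0] L (phi i) = type_of xi i.
Proof. by rewrite /= nth_index // mem_undup map_f // mem_enum. Qed.

Lemma phiE (i : 'I_n) (k : 'I_(size Lam)) :
  (phi i == k) = (type_of xi i == nth [ffun=> 0] L k).
Proof.
apply/eqP/eqP => [<-|E]; first by rewrite nth_phi.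
apply: val_inj => /=; rewrite E index_uniq ?undup_uniq //.
by rewrite -size_Lam.
Qed.

Lemma Lam_reindex (F : {ffun 'I_q -> {ffun A -> R}} -> R) :
  \sum_(k : {ffun 'I_q -> 'I_(size Lam)})
     (\prod_(l < q) (nth (0, 0) Lam (k l)).2) *
       F [ffun l => (nth (0, 0) Lam (k l)).1]
  = \sum_(j : {ffun 'I_q -> 'I_n}) (n%:R ^+ q)^-1 * F [ffun l => type_of xi (j l)].
Proof.
rewrite (partition_big (fun j : {ffun 'I_q -> 'I_n} => [ffun l => phi (j l)]) xpredT) //=.
apply: eq_bigr => k _.
have E : forall j : {ffun 'I_q -> 'I_n}, [ffun l => phi (j l)] == k ->
    [ffun l => type_of xi (j l)] = [ffun l => (nth (0, 0) Lam (k l)).1].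
  move=> j /eqP <-; apply/ffunP => l; rewrite !ffunE nth_Lam /=.
  by rewrite nth_phi.
rewrite [RHS](eq_bigr (fun _ => (n%:R ^+ q)^-1 * F [ffun l => (nth (0, 0) Lam (k l)).1]));
  last by move=> j /= hj; rewrite (E j hj).
set c := (n%:R ^+ q)^-1 * _.
have -> : \sum_(j : {ffun 'I_q -> 'I_n} | true && ([ffun l => phi (j l)] == k)) c =
    (\sum_(j : {ffun 'I_q -> 'I_n}) \prod_l ((phi (j l) == k l)%:R : R)) * c.
  rewrite mulr_suml big_mkcond; apply: eq_bigr => j _ /=.
  rewrite prod_nat_bool.
  have -> : ([ffun l => phi (j l)] == k) = [forall l, phi (j l) == k l].
    apply/eqP/forallP => [<- l|H]; first by rewrite ffunE.
    by apply/ffunP => l; rewrite ffunE; apply/eqP.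
  by case: [forall l, _]; rewrite ?mul1r ?mul0r.
rewrite /c mulrA; congr (_ * _).
rewrite (sum_prod_ffun (fun l i => ((phi i == k l)%:R : R))).
have -> : (n%:R ^+ q)^-1 = \prod_(l < q) (n%:R : R)^-1.
  by rewrite prodr_const card_ord exprVn.
rewrite mulrC -big_split /=.
apply: eq_bigr => l _; rewrite nth_Lam /= mulrC; congr (_ * _).
rewrite sum_nat_bool; congr (_%:R); apply: eq_card => i; rewrite !inE phiE //.
Qed.
End Lam.

End W2.
Import W2.

Module W3.
Set Implicit Arguments. Unset Strict Implicit. Unset Printing Implicit Defensive.

Section Basic.
Variables (R : realFieldType) (n q : nat) (A : finType)
  (xi : {ffun bvec n * A -> R}).
Hypothesis xi0 : forall p, 0 <= xi p.

Local Notation eta := (marg2 xi).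
Local Notation c := (cond1 xi).

Lemma eta0 b : 0 <= eta b.
Proof. by rewrite /eta ffunE sumr_ge0. Qed.

Lemma cE b x : c b x = xi (x, b) / eta b.
Proof. by rewrite /cond1 [LHS]ffunE. Qed.

Lemma etaE b : eta b = \sum_x xi (x, b).
Proof. by rewrite /marg2 ffunE. Qed.

Lemma eta_c b x : eta b * c b x = xi (x, b).
Proof.
rewrite cE.
have [E|nz] := eqVneq (eta b) 0.
  rewrite E mul0r; apply/esym.
  move: E; rewrite etaE.
  by move/psumr_eq0P => H; rewrite H.
by rewrite mulrCA divff ?mulr1.
Qed.

Lemma c0 b x : 0 <= c b x.
Proof. by rewrite cE divr_ge0 // eta0. Qed.

Lemma c1 b : 0 < eta b -> \sum_x c b x = 1.
Proof.
move=> hb.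
under eq_bigr => x _ do rewrite cE.
by rewrite -mulr_suml -etaE divff // lt0r_neq0.
Qed.

Lemma marg_ber b (i : 'I_n) z : 0 < eta b ->
  marg_coord (c b) i z = ber (type_of xi i b) z.
Proof.
move=> hb; rewrite /marg_coord /type_of [LHS]ffunE [in RHS]ffunE hb.
case: z => /=.
  by apply: eq_bigl => x; rewrite eqb_id.
rewrite -(c1 hb) [X in X - _](bigID (fun x : bvec n => x i)) /= [X in X - _]addrC addrK.
by apply: eq_bigl => x; rewrite eqbF_neg.
Qed.

Lemma ber0 b (i : 'I_n) z : 0 < eta b -> 0 <= ber (type_of xi i b) z.
Proof.
move=> hb; rewrite -marg_ber // /marg_coord ffunE sumr_ge0 // => x _; exact: c0.
Qed.

Lemma sum_ber (t : R) : \sum_z ber t z = 1.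
Proof. by rewrite big_bool /= addrC subrK. Qed.

Lemma proj0 (nu : {ffun bvec n -> R}) (j : {ffun 'I_q -> 'I_n}) z : (forall x, 0 <= nu x) ->
  0 <= proj nu j z.
Proof. by move=> h; rewrite /proj ffunE sumr_ge0. Qed.

Lemma sum_proj (nu : {ffun bvec n -> R}) (j : {ffun 'I_q -> 'I_n}) :
  \sum_z proj nu j z = \sum_x nu x.
Proof.
rewrite /proj.
under eq_bigr => z _ do rewrite ffunE big_mkcond /=.
rewrite exchange_big /=; apply: eq_bigr => x _.
rewrite (bigD1 [ffun k => x (j k)]) //= big1 ?addr0.
  have -> : [forall k, x (j k) == [ffun k0 => x (j k0)] k] by apply/forallP => k; rewrite ffunE.
  by [].
move=> z hz; case: ifP => // /forallP H; case/eqP: hz; apply/ffunP => k.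
by rewrite ffunE; apply/esym/eqP.
Qed.

End Basic.

End W3.
Import W3.

Module W4.
Set Implicit Arguments. Unset Strict Implicit. Unset Printing Implicit Defensive.

Section Repr.
Variables (R : realFieldType) (s q n : nat) (A : finType)
  (mu : {ffun bvec n -> R}) (xi : {ffun bvec n * A -> R}).
Hypothesis xi0 : forall p, 0 <= xi p.
Hypothesis hmu : marg1 xi = mu.

Local Notation eta := (marg2 xi).
Local Notation c := (cond1 xi).

Definition Pm (b : A) (j : {ffun 'I_q -> 'I_n}) (z : bvec q) : R := proj (c b) j z.
Definition Qm (b : A) (j : {ffun 'I_q -> 'I_n}) (z : bvec q) : R :=
  \prod_(l < q) ber (type_of xi (j l) b) (z l).
Definition rowf (M : 'M[bool]_(s, q)) : {ffun 'I_s -> bvec q} :=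
  [ffun i => [ffun k => M i k]].

Lemma Dsim_eq M : D_sim s q eta (type_dist xi) M =
  \sum_(a : {ffun 'I_s -> A}) \sum_(j : {ffun 'I_q -> 'I_n})
     (n%:R ^+ q)^-1 * ((\prod_i eta (a i)) * \prod_i Qm (a i) j (rowf M i)).
Proof.
rewrite /D_sim ffunE; apply: eq_bigr => a _.
pose F := fun tau : {ffun 'I_q -> {ffun A -> R}} => (\prod_i eta (a i)) *
   \prod_(i < s) \prod_(l < q) ber (tau l (a i)) (M i l).
rewrite (eq_bigr (fun k : {ffun 'I_q -> 'I_(size (type_dist xi))} => (\prod_(l<q) (nth (0,0) (type_dist xi) (k l)).2) *
    F [ffun l => (nth (0,0) (type_dist xi) (k l)).1])).
  rewrite Lam_reindex; apply: eq_bigr => j _; rewrite /F /Qm; congr (_ * (_ * _)).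
  apply: eq_bigr => i _; apply: eq_bigr => l _; by rewrite !ffunE.
move=> k _; rewrite /F (mulrC (\prod_i eta (a i))) -mulrA; congr (_ * (_ * _)).
apply: eq_bigr => i _; apply: eq_bigr => l _; by rewrite !ffunE.
Qed.

Lemma proj_mix (j : {ffun 'I_q -> 'I_n}) y :
  proj mu j y = \sum_b eta b * proj (c b) j y.
Proof.
rewrite /proj ffunE.
under [RHS]eq_bigr do rewrite [proj _ _ _]ffunE mulr_sumr.
rewrite exchange_big; apply: eq_bigr => x _.
rewrite -hmu /marg1 ffunE; apply: eq_bigr => b _; by rewrite eta_c.
Qed.

Lemma Dtest_eq M : D_test s q mu M =
  \sum_(a : {ffun 'I_s -> A}) \sum_(j : {ffun 'I_q -> 'I_n})
     (n%:R ^+ q)^-1 * ((\prod_i eta (a i)) * \prod_i Pm (a i) j (rowf M i)).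
Proof.
rewrite /D_test ffunE exchange_big /= [RHS]exchange_big /=.
apply: eq_bigr => j _.
rewrite -mulr_sumr.
have -> : \sum_(x : {ffun 'I_s -> bvec n}) (\prod_i mu (x i)) * (n%:R ^+ q)^-1 *
    (if [forall i, forall k, x i (j k) == M i k] then 1 else 0) =
    (n%:R ^+ q)^-1 * \sum_(x : {ffun 'I_s -> bvec n})
      \prod_i (mu (x i) * ([forall k, x i (j k) == M i k])%:R).
  rewrite mulr_sumr; apply: eq_bigr => x _.
  rewrite big_split /= prod_nat_bool mulrAC mulrC; congr (_ * _).
  have -> : [forall i, [forall k, x i (j k) == M i k]] =
            [forall i, forall k, x i (j k) == M i k] by [].
  by case: [forall i, _].
congr (_ * _).
rewrite (sum_prod_ffun (fun i z => mu z * ([forall k, z (j k) == M i k])%:R)).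
have H : forall i : 'I_s, \sum_z mu z * ([forall k, z (j k) == M i k])%:R =
    \sum_b eta b * Pm b j (rowf M i).
  move=> i; rewrite -proj_mix /proj ffunE [RHS]big_mkcond /=.
  apply: eq_bigr => z _.
  have -> : [forall k, z (j k) == rowf M i k] = [forall k, z (j k) == M i k].
    by apply: eq_forallb => k; rewrite /rowf !ffunE.
  by case: [forall k, _]; rewrite ?mulr1 ?mulr0.
under eq_bigr => i _ do rewrite H.
rewrite -(sum_prod_ffun (fun i b => eta b * Pm b j (rowf M i))) /=.
by apply: eq_bigr => a _; rewrite big_split.
Qed.

End Repr.

End W4.
Import W4.

Module W5.
Set Implicit Arguments. Unset Strict Implicit. Unset Printing Implicit Defensive.

Lemma dist_le2 (R : realFieldType) (T : finType) (P Q : T -> R) :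
  (forall t, 0 <= P t) -> (forall t, 0 <= Q t) ->
  \sum_t P t = 1 -> \sum_t Q t = 1 -> \sum_t `|Q t - P t| <= 2.
Proof.
move=> P0 Q0 P1 Q1.
apply: (le_trans (ler_sum _ (fun t _ => ler_normB (Q t) (P t)))).
rewrite big_split /=.
under eq_bigr => t _ do rewrite ger0_norm //.
under [X in _ + X]eq_bigr => t _ do rewrite ger0_norm //.
by rewrite P1 Q1.
Qed.

Section TV.
Variables (R : realFieldType) (s q n : nat) (A : finType)
  (mu : {ffun bvec n -> R}) (xi : {ffun bvec n * A -> R}).
Hypothesis xi0 : forall p, 0 <= xi p.
Hypothesis hmu : marg1 xi = mu.

Local Notation eta := (marg2 xi).
Local Notation c := (cond1 xi).
Local Notation Pm := (@Pm R q n A xi).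
Local Notation Qm := (@Qm R q n A xi).

Lemma sum_rowf (F : {ffun 'I_s -> bvec q} -> R) :
  \sum_(M : 'M[bool]_(s, q)) F (rowf M) = \sum_y F y.
Proof.
rewrite [RHS](reindex (@rowf s q)) //; apply: onW_bij.
exists (fun y : {ffun 'I_s -> bvec q} => \matrix_(i, k) y i k).
  by move=> M; apply/matrixP => i k; rewrite mxE /rowf !ffunE.
by move=> y; apply/ffunP => i; apply/ffunP => k; rewrite /rowf !ffunE mxE.
Qed.

Definition Delta (a : {ffun 'I_s -> A}) (j : {ffun 'I_q -> 'I_n}) : R :=
  \sum_(y : {ffun 'I_s -> bvec q})
     `|\prod_i Qm (a i) j (y i) - \prod_i Pm (a i) j (y i)|.

Definition delta (b : A) (j : {ffun 'I_q -> 'I_n}) : R :=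
  \sum_(z : bvec q) `|Qm b j z - Pm b j z|.

Lemma dTV_bound1 :
  dTV (D_sim s q eta (type_dist xi)) (D_test s q mu) <=
  2^-1 * \sum_(a : {ffun 'I_s -> A}) \sum_(j : {ffun 'I_q -> 'I_n})
     (n%:R ^+ q)^-1 * ((\prod_i eta (a i)) * Delta a j).
Proof.
rewrite /dTV; apply: ler_wpM2l; first by rewrite invr_ge0.
under eq_bigr => M _ do rewrite Dsim_eq (Dtest_eq xi0 hmu) -sumrB.
apply: (le_trans (ler_sum _ (fun M _ => ler_norm_sum _ _ _))).
rewrite exchange_big /=; apply: ler_sum => a _.
under eq_bigr => M _ do rewrite -sumrB.
apply: (le_trans (ler_sum _ (fun M _ => ler_norm_sum _ _ _))).
rewrite exchange_big /=; apply: ler_sum => j _.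
rewrite /Delta -(sum_rowf (fun y => `|\prod_i Qm (a i) j (y i) - \prod_i Pm (a i) j (y i)|)).
have hw : 0 <= \prod_i eta (a i) by rewrite prodr_ge0 // => i _; exact: eta0.
have hN : 0 <= (n%:R ^+ q)^-1 :> R by rewrite invr_ge0 exprn_ge0 ?ler0n.
under eq_bigr => M _ do rewrite -!mulrBr normrM normrM (ger0_norm hw) (ger0_norm hN).
by rewrite -!mulr_sumr.
Qed.


Lemma Qm0 b (j : {ffun 'I_q -> 'I_n}) z : 0 < eta b -> 0 <= Qm b j z.
Proof. by move=> hb; rewrite /W4.Qm prodr_ge0 // => l _; apply: ber0. Qed.

Lemma Qm1 b (j : {ffun 'I_q -> 'I_n}) : \sum_z Qm b j z = 1.
Proof.
rewrite /W4.Qm (sum_prod_ffun (fun l z => ber (type_of xi (j l) b) z)).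
by rewrite big1 // => l _; rewrite sum_ber.
Qed.

Lemma Pm0 b (j : {ffun 'I_q -> 'I_n}) z : 0 <= Pm b j z.
Proof. by rewrite /W4.Pm proj0 // => x; apply: c0. Qed.

Lemma Pm1 b (j : {ffun 'I_q -> 'I_n}) : 0 < eta b -> \sum_z Pm b j z = 1.
Proof. by move=> hb; rewrite /W4.Pm sum_proj c1. Qed.

Lemma Delta_le2 (a : {ffun 'I_s -> A}) (j : {ffun 'I_q -> 'I_n}) : (forall i, 0 < eta (a i)) -> Delta a j <= 2.
Proof.
move=> ha; apply: dist_le2.
- by move=> y; rewrite prodr_ge0 // => i _; apply: Pm0.
- by move=> y; rewrite prodr_ge0 // => i _; apply: Qm0.
- by rewrite (sum_prod_ffun (fun i z => Pm (a i) j z)) big1 // => i _; rewrite Pm1.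
- by rewrite (sum_prod_ffun (fun i z => Qm (a i) j z)) big1 // => i _; rewrite Qm1.
Qed.

Lemma Delta_hyb (a : {ffun 'I_s -> A}) (j : {ffun 'I_q -> 'I_n}) : (forall i, 0 < eta (a i)) ->
  Delta a j <= \sum_i delta (a i) j.
Proof.
move=> ha; rewrite /Delta /delta; apply: hybrid.
- by move=> i z; apply: Pm0.
- by move=> i z; apply: Qm0.
- by move=> i; rewrite Pm1.
- by move=> i; rewrite Qm1.
Qed.

Lemma delta_le2 b (j : {ffun 'I_q -> 'I_n}) : 0 < eta b -> delta b j <= 2.
Proof.
move=> hb; apply: dist_le2.
- by move=> z; apply: Pm0.
- by move=> z; apply: Qm0.
- by rewrite Pm1.
- by rewrite Qm1.
Qed.

Lemma delta_ind b (j : {ffun 'I_q -> 'I_n}) e : 0 < eta b -> eps_indep e (c b) j -> delta b j <= 2 * e.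
Proof.
move=> hb; rewrite /eps_indep /dTV => H.
have -> : delta b j = 2 * (2^-1 * \sum_x `|proj (c b) j x - prod_marg (c b) j x|).
  rewrite mulrA divff ?mul1r ?pnatr_eq0 //; apply: eq_bigr => z _.
  rewrite distrC /W4.Pm /W4.Qm /prod_marg ffunE; congr (`|_ - _|).
  by rewrite ffunE; apply: eq_bigr => l _; rewrite marg_ber.
by rewrite ler_pM2l.
Qed.

End TV.

End W5.
Import W5.

Module W6.
Set Implicit Arguments. Unset Strict Implicit. Unset Printing Implicit Defensive.

Section Comb.
Variable R : realFieldType.

Lemma natr_andb (a b : bool) : ((a && b)%:R : R) = a%:R * b%:R.
Proof. by case: a; case: b; rewrite ?mulr1 ?mulr0. Qed.

Lemma sum_eq1 (T : finType) (i : T) : \sum_(x : T) ((x == i)%:R : R) = 1.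
Proof. by rewrite (bigD1 i) //= eqxx big1 ?addr0 // => x /negbTE ->. Qed.

Lemma pair_count (q n : nat) (k l : 'I_q) : k != l ->
  (\sum_(j : {ffun 'I_q -> 'I_n}) ((j k == j l)%:R : R)) * n%:R = n%:R ^+ q.
Proof.
move=> kl.
pose h (i : 'I_n) (m : 'I_q) (x : 'I_n) : R :=
  if (m == k) || (m == l) then (x == i)%:R else 1.
have E (j : {ffun 'I_q -> 'I_n}) :
    ((j k == j l)%:R : R) = \sum_(i : 'I_n) \prod_m h i m (j m).
  have E1 i : \prod_m h i m (j m) = (j k == i)%:R * (j l == i)%:R.
    rewrite (bigD1 k) //= (bigD1 l) /=; last by rewrite eq_sym.
    rewrite big1 ?mulr1 /h ?eqxx ?orbT //.
    by move=> m /andP [ml mk]; rewrite (negbTE ml) (negbTE mk).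
  under eq_bigr => i _ do rewrite E1.
  rewrite (bigD1 (j k)) //= eqxx mul1r big1 ?addr0 ?(eq_sym (j l)) //.
  by move=> i /negbTE; rewrite eq_sym => ->; rewrite mul0r.
under eq_bigr => j _ do rewrite E.
rewrite exchange_big /=.
under eq_bigr => i _ do rewrite (sum_prod_ffun (fun m x => h i m x)).
have E2 i (m : 'I_q) : \sum_x h i m x = if (m == k) || (m == l) then 1 else n%:R.
  rewrite /h; case: ifP => _; first by rewrite sum_eq1.
  by rewrite sumr_const card_ord.
under eq_bigr => i _ do under eq_bigr => m _ do rewrite E2.
rewrite sumr_const card_ord -[_ *+ n]mulr_natr -mulrA.
have -> : (n%:R : R) ^+ q = \prod_(m < q) ((if (m == k) || (m == l) then 1 else n%:R) *
            (if (m == k) || (m == l) then n%:R else 1)).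
  have P1 : \prod_(m < q) (n%:R : R) = n%:R ^+ q by rewrite prodr_const card_ord.
  rewrite -P1; apply: eq_bigr => m _.
  by case: ifP; rewrite ?mul1r ?mulr1.
rewrite big_split /=; congr (_ * _).
rewrite (bigD1 k) //= (bigD1 l) /=; last by rewrite eq_sym.
rewrite !eqxx orbT orTb big1 ?mulr1 //.
by move=> m /andP [ml mk]; rewrite (negbTE ml) (negbTE mk).
Qed.

Lemma noninj_le (q n : nat) (j : {ffun 'I_q -> 'I_n}) :
  ((~~ injectiveb j)%:R : R) <=
  \sum_(k : 'I_q) \sum_(l : 'I_q) (((k != l) && (j k == j l))%:R).
Proof.
case hj: (injectiveb j).
  by rewrite /= sumr_ge0 // => k _; rewrite sumr_ge0.
case: (@existsP _ (fun k => [exists l, (k != l) && (j k == j l)])) => [[k /existsP [l H]]|H].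
  rewrite (bigD1 k) //= (bigD1 l) //= H /= -addrA lerDl.
  by rewrite addr_ge0 ?sumr_ge0 // => x _; rewrite ?sumr_ge0.
exfalso; move/negbT: hj; apply/negP/negPn/injectiveP => k l E.
apply/eqP; apply/negPn/negP => kl; apply: H; exists k; apply/existsP; exists l.
by rewrite kl E eqxx.
Qed.

Lemma noninj_bound (q n : nat) :
  (\sum_(j : {ffun 'I_q -> 'I_n}) ((~~ injectiveb j)%:R : R)) * n%:R <=
  (q ^ 2)%:R * n%:R ^+ q.
Proof.
have hN : 0 <= (n%:R : R) by rewrite ler0n.
apply: (le_trans (ler_wpM2r hN (ler_sum _ (fun j _ => noninj_le j)))).
rewrite exchange_big mulr_suml /=.
have -> : (q ^ 2)%:R * n%:R ^+ q = \sum_(k < q) \sum_(l < q) ((n%:R : R) ^+ q).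
  by rewrite !sumr_const !card_ord -mulrnA -[RHS]mulr_natl mulnn.
apply: ler_sum => k _.
rewrite exchange_big mulr_suml /=; apply: ler_sum => l _.
under eq_bigr => j _ do rewrite natr_andb.
rewrite -mulr_sumr -mulrA.
case: eqP => [_|/eqP kl]; first by rewrite mul0r exprn_ge0.
by rewrite pair_count // mul1r.
Qed.

End Comb.

End W6.
Import W6.

Module W7.
Set Implicit Arguments. Unset Strict Implicit. Unset Printing Implicit Defensive.

Section Final.
Variables (R : realFieldType) (s q n : nat) (A : finType)
  (mu : {ffun bvec n -> R}) (xi : {ffun bvec n * A -> R}).
Hypothesis xi0 : forall p, 0 <= xi p.
Hypothesis hmu : marg1 xi = mu.
Local Notation eta := (marg2 xi).
Local Notation c := (cond1 xi).
Hypothesis eta1 : \sum_b eta b = 1.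
Variables (J : {set A}) (e : R).
Hypothesis e0 : 0 <= e.
Hypothesis hJ1 : 1 - e <= \sum_(b in J) eta b.
Hypothesis hJ : forall b, b \in J -> 0 < eta b /\ good_dist e q (c b).

Lemma w_sum1 : \sum_(a : {ffun 'I_s -> A}) \prod_i eta (a i) = 1.
Proof. by rewrite (sum_prod_ffun (fun i b => eta b)) big1. Qed.

Lemma marg_lemma (i0 : 'I_s) (f : A -> R) :
  \sum_(a : {ffun 'I_s -> A}) (\prod_i eta (a i)) * f (a i0) = \sum_b eta b * f b.
Proof.
pose g (i : 'I_s) b := if i == i0 then eta b * f b else eta b.
have E (a : {ffun 'I_s -> A}) : (\prod_i eta (a i)) * f (a i0) = \prod_i g i (a i).
  rewrite (bigD1 i0) //= [RHS](bigD1 i0) //= /g eqxx mulrAC; congr (_ * _).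
  by apply: eq_bigr => i /negbTE ->.
under eq_bigr => a _ do rewrite E.
rewrite (sum_prod_ffun g) (bigD1 i0) //= [X in _ * X]big1 ?mulr1.
  by apply: eq_bigr => b _; rewrite /g eqxx.
by move=> i /negbTE hi; under eq_bigr => b _ do rewrite /g hi; rewrite eta1.
Qed.

Definition beta (b : A) (j : {ffun 'I_q -> 'I_n}) : R :=
  2 * (e + (b \notin J)%:R + ((b \in J) && ~~ eps_indep e (c b) j)%:R).

Definition G (a : {ffun 'I_s -> A}) (j : {ffun 'I_q -> 'I_n}) : R :=
  (injectiveb j)%:R * \sum_i beta (a i) j + (~~ injectiveb j)%:R * 2.

Lemma delta_beta b (j : {ffun 'I_q -> 'I_n}) : 0 < eta b -> delta xi b j <= beta b j.
Proof.
move=> hb; rewrite /beta.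
have h2 := delta_le2 xi0 j hb.
case hbJ : (b \in J) => /=.
  case hi : (eps_indep e (c b) j) => /=.
    by rewrite !addr0; apply: delta_ind.
  by rewrite addr0 mulrDr mulr1; apply: (le_trans h2); rewrite lerDr mulr_ge0.
by rewrite addr0 mulrDr mulr1; apply: (le_trans h2); rewrite lerDr mulr_ge0.
Qed.

Lemma term_bound (a : {ffun 'I_s -> A}) (j : {ffun 'I_q -> 'I_n}) :
  (\prod_i eta (a i)) * Delta xi a j <= (\prod_i eta (a i)) * G a j.
Proof.
have [w0|wn0] := eqVneq (\prod_i eta (a i)) 0; first by rewrite w0 !mul0r.
have ha : forall i, 0 < eta (a i).
  move=> i; rewrite lt0r eta0 // andbT; apply/eqP => E; move/eqP: wn0; apply.
  by rewrite (bigD1 i) //= E mul0r.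
apply: ler_wpM2l; first by rewrite prodr_ge0 // => i _; apply: eta0.
rewrite /G; case hj : (injectiveb j) => /=; rewrite ?mul1r ?mul0r ?addr0 ?add0r.
  apply: (le_trans (Delta_hyb xi0 j ha)); apply: ler_sum => i _; exact: delta_beta.
exact: (Delta_le2 xi0 j ha).
Qed.

Lemma sum_a_G (j : {ffun 'I_q -> 'I_n}) : \sum_(a : {ffun 'I_s -> A}) (\prod_i eta (a i)) * G a j =
  (injectiveb j)%:R * (s%:R * \sum_b eta b * beta b j) + (~~ injectiveb j)%:R * 2.
Proof.
rewrite /G; under eq_bigr => a _ do rewrite mulrDr.
rewrite big_split /=; congr (_ + _).
  under eq_bigr => a _ do rewrite mulrCA mulr_sumr.
  rewrite -mulr_sumr exchange_big /=; congr (_ * _).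
  under eq_bigr => i _ do rewrite (marg_lemma i (fun b => beta b j)).
  by rewrite sumr_const card_ord mulr_natl.
by rewrite -mulr_suml w_sum1 mul1r.
Qed.

Lemma sum_nat_bool_P (T : finType) (P b : pred T) :
  \sum_(x | P x) ((b x)%:R : R) = #|[set x | P x && b x]|%:R.
Proof.
rewrite big_mkcond /= -sum_nat_bool; apply: eq_bigr => x _.
by case: (P x).
Qed.

Lemma beta_sum b : \sum_(j : {ffun 'I_q -> 'I_n}) (injectiveb j)%:R * beta b j <=
  2 * (2 * e + (b \notin J)%:R) * \sum_(j : {ffun 'I_q -> 'I_n}) ((injectiveb j)%:R : R).
Proof.
set K := \sum_(j : {ffun 'I_q -> 'I_n}) ((injectiveb j)%:R : R).
rewrite /beta.
have ES : \sum_(j : {ffun 'I_q -> 'I_n}) (injectiveb j)%:R *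
   (2 * (e + (b \notin J)%:R + ((b \in J) && ~~ eps_indep e (c b) j)%:R)) =
   2 * (e * K) + 2 * ((b \notin J)%:R * K) + 2 * \sum_(j : {ffun 'I_q -> 'I_n})
     (injectiveb j)%:R * ((b \in J) && ~~ eps_indep e (c b) j)%:R.
  rewrite /K !mulr_sumr -!big_split /=; apply: eq_bigr => j _; ring.
rewrite ES.
case hbJ : (b \in J) => /=; last first.
  rewrite big1 ?mulr0 ?addr0; last by move=> j _; rewrite mulr0.
  have K0 : 0 <= K by rewrite /K sumr_ge0 // => j _; rewrite ler0n.
  have := mulr_ge0 e0 K0; nra.
have [_ hg] := hJ hbJ; move: hg; rewrite /good_dist => hg.
have E : K = #|[set j : {ffun 'I_q -> 'I_n} | injectiveb j]|%:R.
  by rewrite /K sum_nat_bool.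
have E2 : \sum_(j : {ffun 'I_q -> 'I_n}) (injectiveb j)%:R * (~~ eps_indep e (c b) j)%:R =
   K - #|[set j : {ffun 'I_q -> 'I_n} | injectiveb j && eps_indep e (c b) j]|%:R.
  rewrite -sum_nat_bool /K -sumrB; apply: eq_bigr => j _.
  by case: (injectiveb j); case: (eps_indep _ _ _); rewrite ?mulr1 ?mulr0 ?subr0 ?subrr.
rewrite E2 E; lra.
Qed.

End Final.

End W7.
Import W7.

Unset Implicit Arguments. Set Strict Implicit.

Theorem lemma4p1 (R : realFieldType) (s q n : nat) (eps : R)
  (A : finType) (mu : {ffun bvec n -> R}) (xi : {ffun bvec n * A -> R}) :
  0 < eps < 1 ->
  is_dist mu ->
  is_detailing mu xi ->
  good_detailing (eps / (3 * (s.+1)%:R)) q xi ->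
  6 * (q ^ 2 * s.+1)%:R / eps <= n%:R ->
  dTV (D_sim s q (marg2 xi) (type_dist xi)) (D_test s q mu) <= eps.
Proof.
move=> /andP [eps0 eps1] _ [[xi0 xi1] hmu] [J [hJ1 hJ]] hN.
set e := eps / (3 * (s.+1)%:R) in hJ1 hJ.
have S0 : 0 < (s.+1)%:R :> R by rewrite ltr0n.
have eE : e * (3 * (s.+1)%:R) = eps.
  by rewrite /e mulrVK // unitfE mulf_neq0 // ?lt0r_neq0 // ltr0n.
have e0 : 0 <= e by rewrite /e divr_ge0 // ?mulr_ge0 // ltW.
have eta1 : \sum_b marg2 xi b = 1.
  under eq_bigr do rewrite ffunE.
  rewrite exchange_big pair_big /= -xi1; apply: eq_bigr => [[x b]] _ //.
set N := (n%:R : R).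
set K := \sum_(j : {ffun 'I_q -> 'I_n}) ((injectiveb j)%:R : R).
set Z := \sum_(j : {ffun 'I_q -> 'I_n}) ((~~ injectiveb j)%:R : R).
have N0 : 0 <= N by rewrite ler0n.
have Nq0 : 0 <= (N ^+ q)^-1 by rewrite invr_ge0 exprn_ge0.
have K0 : 0 <= K by rewrite sumr_ge0 // => j _; rewrite ler0n.
have Z0 : 0 <= Z by rewrite sumr_ge0 // => j _; rewrite ler0n.
pose T := \sum_b marg2 xi b * \sum_(j : {ffun 'I_q -> 'I_n})
             (injectiveb j)%:R * beta xi J e b j.
have H1 : dTV (D_sim s q (marg2 xi) (type_dist xi)) (D_test s q mu) <=
    2^-1 * ((N ^+ q)^-1 * (s%:R * T + 2 * Z)).
  apply: (le_trans (dTV_bound1 s q xi0 hmu)).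
  rewrite ler_pM2l ?invr_gt0 ?ltr0n //.
  apply: (@le_trans _ _ (\sum_(a : {ffun 'I_s -> A}) \sum_(j : {ffun 'I_q -> 'I_n})
     (N ^+ q)^-1 * ((\prod_i marg2 xi (a i)) * G xi J e a j))).
    apply: ler_sum => a _; apply: ler_sum => j _; apply: ler_wpM2l => //.
    exact: term_bound.
  rewrite exchange_big /=.
  under eq_bigr => j _ do rewrite -mulr_sumr (sum_a_G s eta1).
  rewrite -mulr_sumr big_split /= -mulr_suml mulrC.
  have ET : \sum_(j : {ffun 'I_q -> 'I_n}) (injectiveb j)%:R *
      (s%:R * \sum_b marg2 xi b * beta xi J e b j) = s%:R * T.
    under eq_bigr => j _ do rewrite mulrCA mulr_sumr.
    rewrite -mulr_sumr exchange_big /T; congr (_ * _); apply: eq_bigr => b _.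
    by rewrite mulr_sumr; apply: eq_bigr => j _; rewrite mulrCA.
  by rewrite ET (mulrC Z) mulrC.
have HT : T <= 6 * e * K.
  apply: (@le_trans _ _ (\sum_b marg2 xi b * (2 * (2 * e + (b \notin J)%:R) * K))).
    apply: ler_sum => b _; apply: ler_wpM2l; first exact: eta0.
    exact: beta_sum.
  rewrite (eq_bigr (fun b => (4 * e * K) * marg2 xi b +
       (2 * K) * (marg2 xi b * (b \notin J)%:R))); last by move=> b _; ring.
  rewrite big_split /= -!mulr_sumr eta1.
  have Ec : \sum_b marg2 xi b * (b \notin J)%:R = 1 - \sum_(b in J) marg2 xi b.
    have E1 : \sum_b marg2 xi b = \sum_(b in J) marg2 xi b +
        \sum_(b | b \notin J) marg2 xi b by rewrite (bigID (fun b => b \in J)).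
    rewrite -[in RHS]eta1 [in RHS]E1 addrAC subrr add0r [RHS]big_mkcond /=.
    by apply: eq_bigr => b _; case: (b \in J); rewrite ?mulr0 ?mulr1.
  rewrite Ec; have := mulr_ge0 e0 K0; nra.
have HKu : K * (N ^+ q)^-1 <= 1.
  have HK : K <= N ^+ q.
    apply: (@le_trans _ _ (\sum_(j : {ffun 'I_q -> 'I_n}) (1 : R))).
      by apply: ler_sum => j _; rewrite lern1 leq_b1.
    by rewrite sumr_const card_ffun !card_ord /N natrX.
  have [E|nz] := eqVneq (N ^+ q) 0; first by rewrite E invr0 mulr0 ler01.
  by rewrite ler_pdivrMr ?mul1r // lt0r nz exprn_ge0.
have HZ : Z * (N ^+ q)^-1 * (6 * (s.+1)%:R) <= eps.
  have [q0|qpos] := posnP q.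
    have -> : Z = 0.
      rewrite /Z big1 // => j _.
      suff -> : injectiveb j by [].
      by apply/injectiveP => k; have := ltn_ord k; rewrite {2}q0.
    by rewrite !mul0r ltW.
  have hN' : 6 * (q ^ 2 * s.+1)%:R <= N * eps by rewrite -ler_pdivrMr.
  have Npos : 0 < N.
    apply: (lt_le_trans _ hN); rewrite divr_gt0 // mulr_gt0 // ltr0n.
    by rewrite muln_gt0 expn_gt0 qpos.
  have hZ := noninj_bound R q n.
  rewrite -/Z -/N natrM natrX in hZ hN'.
  have Nq : 0 < N ^+ q by rewrite exprn_gt0.
  set u := (N ^+ q)^-1.
  have uN : N ^+ q * u = 1 by rewrite mulfV // lt0r_neq0.
  have u0 : 0 <= u by rewrite invr_ge0 ltW.
  have hZu : Z * u * N <= (q)%:R ^+ 2.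
    rewrite mulrAC; have := ler_wpM2r u0 hZ; rewrite -[q%:R ^+ 2 * _ * u]mulrA uN mulr1 //.
  have Zu0 : 0 <= Z * u by rewrite mulr_ge0 // sumr_ge0 // => j _; rewrite ler0n.
  have S1 : 0 <= ((s.+1)%:R : R) by rewrite ler0n.
  nra.
have A1 : (N ^+ q)^-1 * (s%:R * T) <= 6 * s%:R * e.
  have s0 : 0 <= (s%:R : R) by rewrite ler0n.
  have := ler_wpM2l (mulr_ge0 Nq0 s0) HT.
  have := mulr_ge0 (mulr_ge0 s0 e0) (ltac:(rewrite subr_ge0; exact: HKu) : 0 <= 1 - K * (N ^+ q)^-1).
  nra.
apply: (le_trans H1).
have Sn : ((s.+1)%:R : R) = s%:R + 1 by rewrite -natr1.
rewrite Sn in eE HZ.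
have s0 : 0 <= (s%:R : R) by rewrite ler0n.
nra.
Qed.
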